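(* Let $\gamma_i\in\mathcal{M}_{k_i}\otimes\mathcal{M}_{k_i}$, $i=1,\dots,n$, be states whose images are not contained in the anti-symmetric subspace of $\mathbb{C}^{k_i}\otimes\mathbb{C}^{k_i}$, and let $S=S(\gamma_1,\dots,\gamma_n)\in\mathcal{M}_{k_1\cdots k_n}\otimes\mathcal{M}_{k_1\cdots k_n}$. Then: (1) $S^\Gamma\ge0$ if and only if $\gamma_i^\Gamma\ge0$ for every $i$; (2) $\mathcal{R}(S^\Gamma)\ge0$ if and only if $\mathcal{R}(\gamma_i^\Gamma)\ge0$ for every $i$; (3) $\mathcal{R}(S)=S$ if and only if $\mathcal{R}(\gamma_i)=\gamma_i$ for every $i$.
   Context: $\mathcal{M}_k$ denotes complex $k\times k$ matrices; $\mathcal{M}_k\otimes\mathcal{M}_m\cong\mathcal{M}_{km}$ via the Kronecker product. A state is a positive semidefinite Hermitian matrix (not necessarily of trace one). The anti-symmetric subspace of $\mathbb{C}^k\otimes\mathbb{C}^k$ is $\{x:F_kx=-x\}$, where $F_k(v\otimes w)=w\otimes v$. Shuffle: if $\gamma_i=\sum_{j=1}^{n_i}A^i_j\otimes B^i_j\in\mathcal{M}_{k_i}\otimes\mathcal{M}_{m_i}$, then $S(\gamma_1,\dots,\gamma_n)=\sum_{j_1,\dots,j_n}A^1_{j_1}\otimes\cdots\otimes A^n_{j_n}\otimes B^1_{j_1}\otimes\cdots\otimes B^n_{j_n}\in\mathcal{M}_{k_1\cdots k_n}\otimes\mathcal{M}_{m_1\cdots m_n}$. Partial transpose: $(\sum_iA_i\otimes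 B_i)^\Gamma=\sum_iA_i\otimes B_i^t$. Realignment on $\mathcal{M}_k\otimes\mathcal{M}_k$: identify $\mathcal{M}_k$ with $\mathbb{C}^k\otimes\mathbb{C}^k$ via $\mathrm{vec}(vw^t)=v\otimes w$ (extended linearly), and set $\mathcal{R}(A\otimes B)=\mathrm{vec}(A)\mathrm{vec}(B)^t$, extended linearly. *)

(* Defs.v *)
(* complex numbers are modelled by algC (algebraic complex
   numbers, a numClosedFieldType with conjugation and the usual partial order
   in which 0 <= z iff z is a nonnegative real). *)
From HB Require Import structures.
From mathcomp Require Import all_boot all_order all_algebra all_field.
Set Implicit Arguments. Unset Strict Implicit. Unset Printing Implicit Defensive.
Import Order.TTheory GRing.Theory Num.Theory.
Local Open Scope ring_scope.

(* Kronecker index conventions: an index r : 'I_(m*n) of C^m (x) C^n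
   corresponds to the pair (r %/ n, r %% n), i.e. e_a (x) e_b <-> a*n+b. *)
Lemma kfst_proof m n (r : 'I_(m * n)) : (r %/ n < m)%N.
Proof.
move: (nat_of_ord r) (ltn_ord r) => x; clear r; case: n => [|n]; first by rewrite muln0.
by move=> h; rewrite ltn_divLR.
Qed.
Lemma ksnd_proof m n (r : 'I_(m * n)) : (r %% n < n)%N.
Proof.
move: (nat_of_ord r) (ltn_ord r) => x; clear r; case: n => [|n]; first by rewrite muln0.
by move=> _; rewrite ltn_mod.
Qed.
Definition kfst m n (r : 'I_(m * n)) : 'I_m := Ordinal (kfst_proof r).
Definition ksnd m n (r : 'I_(m * n)) : 'I_n := Ordinal (ksnd_proof r).

(* entry of a square matrix accessed through natural-number indices
   (0 outside the range; never used out of range below) *)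
Definition mxn (N : nat) (A : 'M[algC]_N) (i j : nat) : algC :=
  match @insub _ (fun x => (x < N)%N) 'I_N i, @insub _ (fun x => (x < N)%N) 'I_N j with
  | Some i', Some j' => A i' j'
  | _, _ => 0
  end.

Lemma kidx_proof m n (a : 'I_m) (b : 'I_n) : (a * n + b < m * n)%N.
Proof.
have lt_b := ltn_ord b; have lt_a := ltn_ord a.
apply: (@leq_trans (a * n + n)); first by rewrite ltn_add2l.
by rewrite -mulSnr leq_mul2r lt_a orbT.
Qed.
Definition kidx m n (a : 'I_m) (b : 'I_n) : 'I_(m * n) := Ordinal (kidx_proof a b).

Definition adjmx (p q : nat) (A : 'M[algC]_(p, q)) : 'M[algC]_(q, p) :=
  \matrix_(i, j) (A j i)^*.

Definition psd (N : nat) (A : 'M[algC]_N) : Prop :=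
  adjmx A = A /\ forall v : 'cV[algC]_N, 0 <= (adjmx v *m A *m v) 0 0.

(* partial transpose on M_m (x) M_n : (A (x) B)^Gamma = A (x) B^t *)
Definition ptrans (m n : nat) (A : 'M[algC]_(m * n)) : 'M[algC]_(m * n) :=
  \matrix_(r, s) A (kidx (kfst r) (ksnd s)) (kidx (kfst s) (ksnd r)).

(* realignment on M_k (x) M_k : R(A (x) B) = vec(A) vec(B)^t with
   vec(v w^t) = v (x) w, i.e. vec(A) has entry A a c at index kidx a c.
   Hence R(gamma)[(a,c),(b,d)] = gamma[(a,b),(c,d)]. *)
Definition realign (k : nat) (A : 'M[algC]_(k * k)) : 'M[algC]_(k * k) :=
  \matrix_(r, s) A (kidx (kfst r) (kfst s)) (kidx (ksnd r) (ksnd s)).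

(* the flip operator F_k (v (x) w) = w (x) v on C^k (x) C^k *)
Definition flipmx (k : nat) : 'M[algC]_(k * k) :=
  \matrix_(r, s) ((kfst r == ksnd s) && (ksnd r == kfst s))%:R.

Definition antisym (k : nat) (x : 'cV[algC]_(k * k)) : Prop :=
  flipmx k *m x = - x.

Definition image_in_antisym (k : nat) (A : 'M[algC]_(k * k)) : Prop :=
  forall v : 'cV[algC]_(k * k), antisym (A *m v).

Definition kprod (n : nat) (k : 'I_n -> nat) : nat := \prod_(i < n) k i.

(* i-th digit (mixed radix, factor 1 most significant) of an index x of
   C^{k_1} (x) ... (x) C^{k_n}, under the Kronecker identification *)
Definition digit (n : nat) (k : 'I_n -> nat) (x : nat) (i : 'I_n) : nat :=
  (x %/ \prod_(j < n | (i < j)%N) k j) %% k i.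

(* If gamma_i = sum_j A^i_j (x) B^i_j then
   S[(a,b),(c,d)] = sum_{j_1..j_n} prod_i A^i_{j_i}[a_i,c_i] B^i_{j_i}[b_i,d_i]
                  = prod_i gamma_i[(a_i,b_i),(c_i,d_i)],
   which is the formula used here (entrywise unfolding of the definition). *)
Definition shuffle (n : nat) (k : 'I_n -> nat)
    (gamma : forall i : 'I_n, 'M[algC]_(k i * k i)) :
    'M[algC]_(kprod k * kprod k) :=
  \matrix_(r, s) \prod_(i < n)
     mxn (gamma i) (digit k (kfst r) i * k i + digit k (ksnd r) i)
                   (digit k (kfst s) i * k i + digit k (ksnd s) i).

(* Main.v *)
Require Import Defs.
From mathcomp Require Import all_boot all_order all_algebra all_field.
Set Implicit Arguments. Unset Strict Implicit. Unset Printing Implicit Defensive.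
Import GRing.Theory Num.Theory.
Local Open Scope ring_scope.

Lemma kfst_kidx m n (a : 'I_m) (b : 'I_n) : kfst (kidx a b) = a.
Proof. apply: val_inj => /=; rewrite divnMDl ?divn_small ?addn0 //; by case: b => b /= Hb; apply: leq_ltn_trans Hb. Qed.

Lemma ksnd_kidx m n (a : 'I_m) (b : 'I_n) : ksnd (kidx a b) = b.
Proof. apply: val_inj => /=; by rewrite modnMDl modn_small. Qed.

Lemma kidxK m n (r : 'I_(m * n)) : kidx (kfst r) (ksnd r) = r.
Proof. apply: val_inj => /=; by rewrite -divn_eq. Qed.

Lemma sum_nat_mul (R : nmodType) m n (F : nat -> R) :
  \sum_(0 <= r < (m * n)%N) F r = \sum_(0 <= a < m) \sum_(0 <= b < n) F (a * n + b)%N.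
Proof.
elim: m => [|m IH]; first by rewrite mul0n !big_geq.
rewrite big_nat_recr //= -IH mulSn addnC (big_cat_nat _ (leq_addr n (m * n))) //=.
congr (_ + _).
have := big_addn 0 (m * n + n) (m * n) xpredT F; rewrite add0n => ->; rewrite addKn.
by apply: eq_bigr => b _; rewrite addnC.
Qed.

Lemma sum_ord_mul (R : nmodType) m n (F : 'I_(m * n) -> R) :
  \sum_(r < m * n) F r = \sum_(a < m) \sum_(b < n) F (kidx a b).
Proof.
rewrite pair_big /=.
rewrite (reindex (fun p : 'I_m * 'I_n => kidx p.1 p.2)) //=.
exists (fun r => (kfst r, ksnd r)) => [p _|r _]; last by rewrite kidxK.
by rewrite kfst_kidx ksnd_kidx; case: p.
Qed.


Lemma prodRN (I : Type) (r : seq I) (P : pred I) (F : I -> nat) :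
  (\prod_(i <- r | P i) F i)%R = (\prod_(i <- r | P i) F i)%N.
Proof. by apply: (big_rec2 (fun x y => x = y)) => //= i x y _ ->. Qed.

Lemma kprodE n (k : 'I_n -> nat) : kprod k = (\prod_(i < n) k i)%N.
Proof. exact: prodRN. Qed.

Lemma digitE n (k : 'I_n -> nat) x i :
  digit k x i = ((x %/ (\prod_(j < n | (i < j)%N) k j)) %% k i)%N.
Proof. by rewrite /digit prodRN. Qed.

Lemma kprodS n (k : 'I_n.+1 -> nat) :
  kprod k = (k ord0 * kprod (fun i : 'I_n => k (lift ord0 i)))%N.
Proof. by rewrite !kprodE big_ord_recl. Qed.

Lemma digit_prod0 n (k : 'I_n.+1 -> nat) :
  (\prod_(j < n.+1 | (@ord0 n < j)%N) k j)%N = kprod (fun i : 'I_n => k (lift ord0 i)).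
Proof.
rewrite kprodE big_mkcond big_ord_recl /= mul1n; apply: eq_bigr => j _.
by [].
Qed.

Lemma digit_prodS n (k : 'I_n.+1 -> nat) (i : 'I_n) :
  (\prod_(j < n.+1 | (lift ord0 i < j)%N) k j)%N
  = (\prod_(j < n | (i < j)%N) k (lift ord0 j))%N.
Proof.
rewrite big_mkcond big_ord_recl /= [RHS]big_mkcond mul1n.
by apply: eq_bigr => j _; rewrite /bump /= !add1n ltnS.
Qed.

Lemma dvd_digit n (k : 'I_n -> nat) (i : 'I_n) :
  ((\prod_(j < n | (i < j)%N) k j) * k i %| kprod k)%N.
Proof.
rewrite kprodE [X in (_ %| X)%N](bigID (fun j : 'I_n => (i < j)%N)) /=.
apply: dvdn_mul => //.
by rewrite (bigD1 i) ?ltnn //= dvdn_mulr.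
Qed.

Lemma digit0 n (k : 'I_n.+1 -> nat) a b :
  (a < k ord0)%N -> (b < kprod (fun i : 'I_n => k (lift ord0 i)))%N ->
  digit k (a * kprod (fun i : 'I_n => k (lift ord0 i)) + b)%N ord0 = a.
Proof.
move=> ha hb; rewrite digitE digit_prod0 divnMDl ?divn_small ?addn0 ?modn_small //.
exact: leq_ltn_trans hb.
Qed.

Lemma digitS n (k : 'I_n.+1 -> nat) a b (i : 'I_n) :
  (b < kprod (fun i : 'I_n => k (lift ord0 i)))%N ->
  digit k (a * kprod (fun i : 'I_n => k (lift ord0 i)) + b)%N (lift ord0 i)
  = digit (fun i : 'I_n => k (lift ord0 i)) b i.
Proof.
set k' := fun i : 'I_n => k (lift ord0 i) => hb.
rewrite !digitE digit_prodS.
have /dvdnP [q hq] := dvd_digit k' i.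
have Pgt0 : (0 < \prod_(j < n | (i < j)%N) k' j)%N.
  have : (0 < kprod k')%N by apply: leq_ltn_trans hb.
  rewrite hq muln_gt0 => /andP[_]; by rewrite muln_gt0 => /andP[].
rewrite hq (mulnC _ (k' i)) mulnA mulnA divnMDl //.
by rewrite modnMDl.
Qed.

Lemma sum_digit (R : comNzRingType) n (k : 'I_n -> nat) (f : 'I_n -> nat -> R) :
  \sum_(0 <= r < kprod k) \prod_(i < n) f i (digit k r i)
  = \prod_(i < n) \sum_(0 <= a < k i) f i a.
Proof.
elim: n k f => [|n IH] k f.
  by rewrite kprodE !big_ord0 big_nat1 big_ord0.
rewrite kprodS sum_nat_mul big_ord_recl.
set k' := fun i : 'I_n => k (lift ord0 i).
rewrite -(IH k' (fun i => f (lift ord0 i))) big_distrl /=.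
apply: eq_big_nat => a /andP[_ ha].
rewrite big_distrr /=; apply: eq_big_nat => b /andP[_ hb].
rewrite big_ord_recl digit0 //; congr (_ * _).
by apply: eq_bigr => i _; rewrite digitS.
Qed.

Lemma mxn_ord N (A : 'M[algC]_N) (p q : 'I_N) : mxn A p q = A p q.
Proof.
rewrite /mxn; case: insubP => [p' _ /val_inj ->|]; last by rewrite ltn_ord.
by case: insubP => [q' _ /val_inj ->|]; last by rewrite ltn_ord.
Qed.

Lemma mxn_adj N (A : 'M[algC]_N) x y : mxn (adjmx A) x y = (mxn A y x)^*.
Proof.
rewrite /mxn; case: insubP => [x' _ _|_]; case: insubP => [y' _ _|_];
  by rewrite ?mxE ?conjC0.
Qed.

Lemma mxn_mul N (A B : 'M[algC]_N) x z : (x < N)%N -> (z < N)%N ->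
  mxn (A *m B) x z = \sum_(q < N) mxn A x q * mxn B q z.
Proof.
move=> hx hz; rewrite -[x]/(nat_of_ord (Ordinal hx)) -[z]/(nat_of_ord (Ordinal hz)).
rewrite mxn_ord mxE; apply: eq_bigr => q _; by rewrite !mxn_ord.
Qed.

Lemma kprod_gt0 n (k : 'I_n -> nat) i : (0 < kprod k)%N -> (0 < k i)%N.
Proof. rewrite kprodE (bigD1 i) //=; by case: (k i). Qed.

Lemma digit_lt n (k : 'I_n -> nat) x i : (x < kprod k)%N -> (digit k x i < k i)%N.
Proof.
move=> hx; rewrite digitE ltn_pmod //; apply: kprod_gt0; exact: leq_ltn_trans hx.
Qed.

Definition pd n (k : 'I_n -> nat) (r : nat) (i : 'I_n) : nat :=
  (digit k (r %/ kprod k) i * k i + digit k (r %% kprod k) i)%N.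

Lemma pd_lt n (k : 'I_n -> nat) r i : (r < kprod k * kprod k)%N ->
  (pd k r i < k i * k i)%N.
Proof.
move=> hr; have K0 : (0 < kprod k)%N by case: (kprod k) hr.
have h1 : (r %/ kprod k < kprod k)%N by rewrite ltn_divLR.
have h2 : (r %% kprod k < kprod k)%N by rewrite ltn_pmod.
exact: (kidx_proof (Ordinal (digit_lt i h1)) (Ordinal (digit_lt i h2))).
Qed.

Lemma shuffle_pd n (k : 'I_n -> nat) (X : forall i, 'M[algC]_(k i * k i)) r s :
  shuffle X r s = \prod_(i < n) mxn (X i) (pd k r i) (pd k s i).
Proof. by rewrite mxE. Qed.

Lemma sum_pd n (k : 'I_n -> nat) (f : 'I_n -> nat -> algC) :
  \sum_(r < (kprod k * kprod k)%N) \prod_(i < n) f i (pd k r i)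
  = \prod_(i < n) \sum_(p < (k i * k i)%N) f i p.
Proof.
rewrite -(big_mkord (fun _ => true) (fun r => \prod_(i < n) f i (pd k r i))) sum_nat_mul.
transitivity (\sum_(0 <= a < kprod k) \prod_(i < n)
   \sum_(0 <= y < k i) f i (digit k a i * k i + y)%N).
  apply: eq_big_nat => a /andP[_ ha]; rewrite -sum_digit.
  apply: eq_big_nat => b /andP[_ hb]; apply: eq_bigr => i _.
  rewrite /pd divnMDl ?divn_small ?addn0 ?modnMDl ?modn_small //.
  exact: leq_ltn_trans hb.
rewrite (sum_digit k (fun i x => \sum_(0 <= y < k i) f i (x * k i + y)%N)).
apply: eq_bigr => i _; by rewrite -sum_nat_mul big_mkord.
Qed.

Lemma sum2_pd n (k : 'I_n -> nat) (F : 'I_n -> nat -> nat -> algC) :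
  \sum_(r < (kprod k * kprod k)%N) \sum_(s < (kprod k * kprod k)%N)
     \prod_(i < n) F i (pd k r i) (pd k s i)
  = \prod_(i < n) \sum_(p < (k i * k i)%N) \sum_(q < (k i * k i)%N) F i p q.
Proof.
rewrite -(sum_pd k (fun i p => \sum_(q < (k i * k i)%N) F i p q)).
apply: eq_bigr => r _; exact: (sum_pd k (fun i q => F i (pd k r i) q)).
Qed.

Lemma shuffleM n (k : 'I_n -> nat) (X Y : forall i, 'M[algC]_(k i * k i)) :
  shuffle X *m shuffle Y = shuffle (fun i => X i *m Y i).
Proof.
apply/matrixP => r t; rewrite mxE shuffle_pd.
transitivity (\sum_(s < (kprod k * kprod k)%N) \prod_(i < n)
   (mxn (X i) (pd k r i) (pd k s i) * mxn (Y i) (pd k s i) (pd k t i))).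
  by apply: eq_bigr => s _; rewrite !shuffle_pd -big_split.
rewrite (sum_pd k (fun i q => mxn (X i) (pd k r i) q * mxn (Y i) q (pd k t i))).
by apply: eq_bigr => i _; rewrite mxn_mul // pd_lt.
Qed.

Lemma shuffle_adj n (k : 'I_n -> nat) (X : forall i, 'M[algC]_(k i * k i)) :
  adjmx (shuffle X) = shuffle (fun i => adjmx (X i)).
Proof.
apply/matrixP => r s; rewrite mxE !shuffle_pd rmorph_prod.
by apply: eq_bigr => i _; rewrite mxn_adj.
Qed.

Definition dig n (k : 'I_n -> nat) (x : 'I_(kprod k)) (i : 'I_n) : 'I_(k i) :=
  Ordinal (digit_lt i (ltn_ord x)).

Lemma shuffleE n (k : 'I_n -> nat) (X : forall i, 'M[algC]_(k i * k i)) r s :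
  shuffle X r s = \prod_(i < n) X i (kidx (dig (kfst r) i) (dig (ksnd r) i))
                                     (kidx (dig (kfst s) i) (dig (ksnd s) i)).
Proof.
rewrite mxE; apply: eq_bigr => i _.
exact: (mxn_ord (X i) (kidx (dig (kfst r) i) (dig (ksnd r) i))
                       (kidx (dig (kfst s) i) (dig (ksnd s) i))).
Qed.

Lemma ptrans_shuffle n (k : 'I_n -> nat) (X : forall i, 'M[algC]_(k i * k i)) :
  ptrans (shuffle X) = shuffle (fun i => ptrans (X i)).
Proof.
apply/matrixP => r s; rewrite mxE !shuffleE; apply: eq_bigr => i _.
by rewrite mxE !kfst_kidx !ksnd_kidx.
Qed.

Lemma realign_shuffle n (k : 'I_n -> nat) (X : forall i, 'M[algC]_(k i * k i)) :
  realign (shuffle X) = shuffle (fun i => realign (X i)).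
Proof.
apply/matrixP => r s; rewrite mxE !shuffleE; apply: eq_bigr => i _.
by rewrite mxE !kfst_kidx !ksnd_kidx.
Qed.

Lemma realignK m (A : 'M[algC]_(m * m)) : realign (realign A) = A.
Proof.
apply/matrixP => r s; rewrite !mxE !kfst_kidx !ksnd_kidx; by rewrite !kidxK.
Qed.

Lemma realignZ m c (A : 'M[algC]_(m * m)) : realign (c *: A) = c *: realign A.
Proof. by apply/matrixP => r s; rewrite !mxE. Qed.

From mathcomp Require Import ring.

Lemma adjmx_tc p q (A : 'M[algC]_(p, q)) : adjmx A = map_mx Num.conj (A^T).
Proof. by apply/matrixP => i j; rewrite !mxE. Qed.

Lemma adjmx_mul p q r (A : 'M[algC]_(p, q)) (B : 'M[algC]_(q, r)) :
  adjmx (A *m B) = adjmx B *m adjmx A.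
Proof. by rewrite !adjmx_tc trmx_mul map_mxM. Qed.

Lemma adjmxK p q (A : 'M[algC]_(p, q)) : adjmx (adjmx A) = A.
Proof. by apply/matrixP => i j; rewrite !mxE conjCK. Qed.

Lemma adjmxD p q (A B : 'M[algC]_(p, q)) : adjmx (A + B) = adjmx A + adjmx B.
Proof. by apply/matrixP => i j; rewrite !mxE rmorphD. Qed.

Lemma adjmxZ p q c (A : 'M[algC]_(p, q)) : adjmx (c *: A) = c^* *: adjmx A.
Proof. by apply/matrixP => i j; rewrite !mxE rmorphM. Qed.

Definition ecol N (p : 'I_N) : 'cV[algC]_N := delta_mx p 0.

Definition qf N (A : 'M[algC]_N) (v : 'cV[algC]_N) : algC := (adjmx v *m A *m v) 0 0.

Lemma bilE N (A : 'M[algC]_N) (u v : 'cV[algC]_N) :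
  (adjmx u *m A *m v) 0 0 = \sum_(p < N) \sum_(q < N) (u p 0)^* * A p q * v q 0.
Proof.
rewrite mxE; under eq_bigr => q _ do rewrite mxE big_distrl /=.
rewrite exchange_big /=; apply: eq_bigr => p _; apply: eq_bigr => q _.
by rewrite mxE.
Qed.

Lemma Bdelta N (A : 'M[algC]_N) (p q : 'I_N) :
  (adjmx (ecol p) *m A *m ecol q) 0 0 = A p q.
Proof.
rewrite /ecol bilE (bigD1 p) //=.
rewrite [X in _ + X]big1 => [|x hx]; last first.
  by apply: big1 => y _; rewrite !mxE (negbTE hx) conjC0 !mul0r.
rewrite addr0 (bigD1 q) //= [X in _ + X]big1 => [|y hy]; last by rewrite !mxE (negbTE hy) mulr0.
by rewrite !mxE !eqxx conjC1 mul1r mulr1 addr0.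
Qed.

Lemma qf2 N (A : 'M[algC]_N) (p q : 'I_N) c :
  qf A (ecol p + c *: ecol q)
  = A p p + c^* * c * A q q + c * A p q + c^* * A q p.
Proof.
rewrite /qf adjmxD adjmxZ !mulmxDl !mulmxDr -!scalemxAl -!scalemxAr !(Bdelta, mxE).
ring.
Qed.

Lemma qf_delta N (A : 'M[algC]_N) (p : 'I_N) : qf A (ecol p) = A p p.
Proof. exact: Bdelta. Qed.

Lemma real_ge0 (x : algC) : 0 <= x -> x^* = x.
Proof. by move/ger0_real/conj_Creal. Qed.

Lemma pol N (A : 'M[algC]_N) : (forall v, 0 <= qf A v) -> adjmx A = A.
Proof.
move=> hA; apply/matrixP => p q; rewrite mxE.
have Ep := real_ge0 (hA (ecol p)); rewrite qf_delta in Ep.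
have Eq := real_ge0 (hA (ecol q)); rewrite qf_delta in Eq.
have E1 := real_ge0 (hA (ecol p + 1 *: ecol q)).
have E2 := real_ge0 (hA (ecol p + 'i *: ecol q)).
rewrite qf2 in E1; rewrite qf2 in E2.
rewrite !rmorphD !rmorphM /= conjC1 Ep Eq in E1.
rewrite !rmorphD !rmorphM /= conjCK conjCi Ep Eq in E2.
set a := A p q in E1 E2 *; set b := A q p in E1 E2 *.
have F1 : a^* + b^* = a + b.
  by apply/eqP; rewrite -subr_eq0; apply/eqP; move/eqP: E1; rewrite -subr_eq0 => /eqP E1;
     rewrite -[RHS]E1; ring.
have F2 : 'i * (b^* - a^* - (a - b)) = 0.
  by move/eqP: E2; rewrite -subr_eq0 => /eqP E2; rewrite -[RHS]E2; ring.
move/eqP: F2; rewrite mulf_eq0 (negbTE (neq0Ci _)) /= => /eqP F2.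
have : (b^* - a) * 2 = (a^* + b^* - (a + b)) + (b^* - a^* - (a - b)) by ring.
rewrite F1 F2 subrr addr0 => /eqP; rewrite mulf_eq0 pnatr_eq0 orbF subr_eq0.
by move/eqP.
Qed.

Lemma psd_diag_ge0 N (A : 'M[algC]_N) p : psd A -> 0 <= A p p.
Proof. by case=> _ h; have := h (ecol p); rewrite -/(qf A (ecol p)) qf_delta. Qed.

Lemma psd_diagpos N (A : 'M[algC]_N) : psd A -> A != 0 -> exists r, 0 < A r r.
Proof.
move=> hA nz; case: (boolP [exists r, 0 < A r r]) => [/existsP[r hr]|/existsPn hn].
  by exists r.
have d0 : forall r, A r r = 0.
  move=> r; apply/eqP; move: (hn r); rewrite lt0r psd_diag_ge0 // andbT.
  by rewrite negbK.
case/negP: nz; apply/eqP/matrixP => p q; rewrite mxE.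
have herm : A q p = (A p q)^*.
  by case: hA => /matrixP /(_ q p); rewrite mxE => <-.
case: hA => _ /(_ (ecol p + (- (A p q)^*) *: ecol q)).
rewrite -/(qf A _) qf2 !d0 herm !mulr0 !add0r.
have -> : (- (A p q)^*)^* = - A p q by rewrite raddfN /= conjCK.
have -> : - (A p q)^* * A p q + - A p q * (A p q)^* = - (2 * (A p q * (A p q)^*)) by ring.
rewrite oppr_ge0 pmulr_rle0 // => h.
have : A p q * (A p q)^* == 0 by rewrite Order.POrderTheory.eq_le h mul_conjC_ge0.
by rewrite mul_conjC_eq0 => /eqP.
Qed.

Lemma herm_sym N (A : 'M[algC]_N) : adjmx A = A -> A \is hermsymmx.
Proof. by move=> h; rewrite is_hermitianmxE expr0 scale1r -adjmx_tc h. Qed.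

Definition psdroot N (A : 'M[algC]_N) : 'M[algC]_N :=
  diag_mx (map_mx sqrtC (spectral_diag A)) *m spectralmx A.

Lemma psd_root N (A : 'M[algC]_N) : psd A -> A = adjmx (psdroot A) *m psdroot A.
Proof.
move=> h.
have hn : A \is normalmx := hermitian_normalmx (herm_sym h.1).
have Pu : spectralmx A \is unitarymx := spectral_unitarymx A.
move/orthomx_spectralP: hn; rewrite /psdroot.
set P := spectralmx A; set d := spectral_diag A => eA.
rewrite invmx_unitary // -adjmx_tc in eA.
have PP : P *m adjmx P = 1%:M by rewrite adjmx_tc; apply/unitarymxP.
have E : P *m A *m adjmx P = diag_mx d.
  by rewrite eA !mulmxA PP mul1mx -mulmxA PP mulmx1.
have dge : forall j, 0 <= d 0 j.
  move=> j; have := h.2 (adjmx P *m ecol j).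
  have -> : adjmx (adjmx P *m ecol j) *m A *m (adjmx P *m ecol j)
          = adjmx (ecol j) *m (P *m A *m adjmx P) *m ecol j.
    by rewrite adjmx_mul adjmxK !mulmxA.
  by rewrite E Bdelta mxE eqxx mulr1n.
set S := diag_mx (map_mx sqrtC d).
have SS : adjmx S = S.
  apply/matrixP => i j; rewrite !mxE eq_sym; case: eqP => [->|_];
    by rewrite ?mulr0n ?conjC0 // !mulr1n real_ge0 // sqrtC_ge0 dge.
have SS2 : S *m S = diag_mx d.
  rewrite mulmx_diag; congr diag_mx; apply/rowP => j; by rewrite !mxE -expr2 sqrtCK.
by rewrite {1}eA adjmx_mul SS -(mulmxA _ S) (mulmxA S) SS2 !mulmxA.
Qed.

Lemma eq_shuffle n (k : 'I_n -> nat) (X Y : forall i, 'M[algC]_(k i * k i)) :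
  (forall i, X i = Y i) -> shuffle X = shuffle Y.
Proof. by move=> h; apply/matrixP => r s; rewrite !mxE; apply: eq_bigr => i _; rewrite h. Qed.

Lemma psd_AA N (C : 'M[algC]_N) : psd (adjmx C *m C).
Proof.
split; first by rewrite adjmx_mul adjmxK.
move=> v; have -> : adjmx v *m (adjmx C *m C) *m v = adjmx (C *m v) *m (C *m v).
  by rewrite adjmx_mul !mulmxA.
rewrite mxE; apply: sumr_ge0 => j _; by rewrite mxE mulrC mul_conjC_ge0.
Qed.

Lemma psd_shuffle n (k : 'I_n -> nat) (X : forall i, 'M[algC]_(k i * k i)) :
  (forall i, psd (X i)) -> psd (shuffle X).
Proof.
move=> h; rewrite (eq_shuffle (fun i => psd_root (h i))).
rewrite -(shuffleM (fun i => adjmx (psdroot (X i))) (fun i => psdroot (X i))).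
rewrite -(shuffle_adj (fun i => psdroot (X i))); exact: psd_AA.
Qed.

Definition cvn N (v : 'cV[algC]_N) (p : nat) : algC :=
  match @insub _ (fun x => (x < N)%N) 'I_N p with Some p' => v p' 0 | None => 0 end.

Lemma cvn_ord N (v : 'cV[algC]_N) (p : 'I_N) : cvn v p = v p 0.
Proof. by rewrite /cvn; case: insubP => [p' _ /val_inj ->|]; last by rewrite ltn_ord. Qed.

Definition prodvec n (k : 'I_n -> nat) (u : 'I_n -> nat -> algC) :
  'cV[algC]_(kprod k * kprod k) := \col_r \prod_(i < n) u i (pd k r i).

Lemma qf_prodvec n (k : 'I_n -> nat) (X : forall i, 'M[algC]_(k i * k i)) u :
  qf (shuffle X) (prodvec k u)
  = \prod_(i < n) \sum_(p < (k i * k i)%N) \sum_(q < (k i * k i)%N)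
      (u i p)^* * mxn (X i) p q * u i q.
Proof.
rewrite /qf bilE -(sum2_pd k (fun i p q => (u i p)^* * mxn (X i) p q * u i q)).
apply: eq_bigr => r _; apply: eq_bigr => s _.
by rewrite !mxE rmorph_prod -!big_split.
Qed.

Lemma qf_cvn N (A : 'M[algC]_N) x :
  \sum_(p < N) \sum_(q < N) (cvn x p)^* * mxn A p q * cvn x q = qf A x.
Proof.
rewrite /qf bilE; apply: eq_bigr => p _; apply: eq_bigr => q _.
by rewrite !cvn_ord mxn_ord.
Qed.

Lemma shuffle_psd_inv n (k : 'I_n -> nat) (X : forall i, 'M[algC]_(k i * k i))
  (w : forall i, 'cV[algC]_(k i * k i)) :
  (forall i, 0 < qf (X i) (w i)) -> psd (shuffle X) -> forall j, psd (X j).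
Proof.
move=> hw hS j.
have hq : forall v, 0 <= qf (X j) v.
  move=> v; pose u := fun i => if i == j then cvn v else cvn (w i).
  have := hS.2 (prodvec k u); rewrite -/(qf _ _) qf_prodvec (bigD1 j) //= /u eqxx qf_cvn.
  rewrite (eq_bigr (fun i => qf (X i) (w i))) => [|i /negbTE ->]; last exact: qf_cvn.
  rewrite pmulr_lge0 //; apply: prodr_gt0 => i _; exact: hw.
split; [exact: pol | exact: hq].
Qed.

Definition omega m : 'cV[algC]_(m * m) := \col_r ((kfst r == ksnd r)%:R).

Lemma qf_omega m (A : 'M[algC]_(m * m)) :
  qf A (omega m) = \sum_(a < m) \sum_(b < m) A (kidx a a) (kidx b b).
Proof.
rewrite /qf bilE sum_ord_mul; apply: eq_bigr => a _.
rewrite (bigD1 a) //= [X in _ + X]big1 => [|a' ha']; last first.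
  apply: big1 => s _; by rewrite !mxE kfst_kidx ksnd_kidx eq_sym (negbTE ha') conjC0 !mul0r.
rewrite addr0 sum_ord_mul; apply: eq_bigr => b _.
rewrite (bigD1 b) //= [X in _ + X]big1 => [|b' hb']; last first.
  by rewrite !mxE !kfst_kidx !ksnd_kidx eq_sym (negbTE hb') mulr0.
by rewrite !mxE !kfst_kidx !ksnd_kidx !eqxx conjC1 mul1r mulr1 addr0.
Qed.

Lemma qf_omega_rp m (A : 'M[algC]_(m * m)) :
  qf (realign (ptrans A)) (omega m) = \sum_r A r r.
Proof.
rewrite qf_omega sum_ord_mul; apply: eq_bigr => a _; apply: eq_bigr => b _.
by rewrite !mxE !kfst_kidx !ksnd_kidx.
Qed.

Lemma tr_realign m (A : 'M[algC]_(m * m)) :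
  \sum_r realign A r r = qf A (omega m).
Proof.
rewrite qf_omega sum_ord_mul; apply: eq_bigr => a _; apply: eq_bigr => b _.
by rewrite !mxE !kfst_kidx !ksnd_kidx.
Qed.

Lemma tr_pos N (A : 'M[algC]_N) : psd A -> A != 0 -> 0 < \sum_r A r r.
Proof.
move=> h nz; have [r hr] := psd_diagpos h nz.
rewrite (bigD1 r) //= ltr_wpDr //; apply: sumr_ge0 => i _; exact: psd_diag_ge0.
Qed.

Lemma contract n (k : 'I_n -> nat) (X : forall i, 'M[algC]_(k i * k i))
    (W : 'I_n -> nat -> nat -> algC) :
  \sum_(r < (kprod k * kprod k)%N) \sum_(s < (kprod k * kprod k)%N)
     shuffle X r s * \prod_(i < n) W i (pd k r i) (pd k s i)
  = \prod_(i < n) \sum_(p < (k i * k i)%N) \sum_(q < (k i * k i)%N) X i p q * W i p q.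
Proof.
transitivity (\prod_(i < n) \sum_(p < (k i * k i)%N) \sum_(q < (k i * k i)%N)
                 mxn (X i) p q * W i p q); last first.
  by apply: eq_bigr => i _; apply: eq_bigr => p _; apply: eq_bigr => q _; rewrite mxn_ord.
rewrite -(sum2_pd k (fun i p q => mxn (X i) p q * W i p q)).
apply: eq_bigr => r _; apply: eq_bigr => s _.
by rewrite shuffle_pd -big_split.
Qed.

Lemma trace_contr N (A : 'M[algC]_N) :
  \sum_(p < N) \sum_(q < N) A p q * (nat_of_ord p == nat_of_ord q)%:R = \sum_(p < N) A p p.
Proof.
apply: eq_bigr => p _; rewrite (bigD1 p) //= [X in _ + X]big1 => [|q hq].
  by rewrite eqxx mulr1 addr0.
by rewrite val_eqE eq_sym (negbTE hq) mulr0.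
Qed.

Lemma entry_contr N (A : 'M[algC]_N) (p0 q0 : 'I_N) :
  \sum_(p < N) \sum_(q < N) A p q * ((nat_of_ord p == p0) && (nat_of_ord q == q0))%:R
  = A p0 q0.
Proof.
rewrite (bigD1 p0) //= [X in _ + X]big1 => [|p hp]; last first.
  by apply: big1 => q _; rewrite val_eqE (negbTE hp) mulr0.
rewrite addr0 (bigD1 q0) //= [X in _ + X]big1 => [|q hq]; last first.
  by rewrite !val_eqE (negbTE hq) andbF mulr0.
by rewrite !eqxx mulr1 addr0.
Qed.

Lemma scal_arg n (k : 'I_n -> nat) (gamma : forall i, 'M[algC]_(k i * k i)) :
  (forall i, psd (gamma i)) -> (forall i, gamma i != 0) ->
  shuffle (fun i => realign (gamma i)) = shuffle gamma ->
  forall j, realign (gamma j) = gamma j.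
Proof.
move=> hp nz hS j.
pose t := fun i => \sum_r gamma i r r.
pose s := fun i => \sum_r realign (gamma i) r r.
have tpos : forall i, 0 < t i by move=> i; exact: tr_pos.
have sge : forall i, 0 <= s i by move=> i; rewrite /s tr_realign; exact: (hp i).2.
pose Ps := \prod_(i < n | i != j) s i.
pose Pt := \prod_(i < n | i != j) t i.
pose W (g : nat -> nat -> algC) := fun i p q => if i == j then g p q else (p == q)%:R.
have key : forall g : nat -> nat -> algC,
   (\sum_(p < (k j * k j)%N) \sum_(q < (k j * k j)%N) realign (gamma j) p q * g p q) * Ps
 = (\sum_(p < (k j * k j)%N) \sum_(q < (k j * k j)%N) gamma j p q * g p q) * Pt.
  move=> g.
  have := congr1 (fun M : 'M[algC]_(kprod k * kprod k) => \sum_(r < (kprod k * kprod k)%N) \sum_(s < (kprod k * kprod k)%N)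
       M r s * \prod_(i < n) W g i (pd k r i) (pd k s i)) hS.
  rewrite /= !contract (bigD1 j) //= [in RHS](bigD1 j) //= /W eqxx.
  rewrite (eq_bigr (fun i => s i)) => [|i /negbTE ->]; last exact: trace_contr.
  by rewrite [in RHS](eq_bigr (fun i => t i)) => [|i /negbTE ->]; last exact: trace_contr.
have Etr := key (fun p q => (p == q)%:R); rewrite !trace_contr -/(s j) -/(t j) in Etr.
have Ptpos : 0 < Pt by apply: prodr_gt0 => i _; exact: tpos.
have Psnz : Ps != 0.
  apply/negP => /eqP e; move: Etr; rewrite e mulr0 => /eqP.
  by rewrite eq_sym mulf_eq0 !Order.POrderTheory.gt_eqF.
pose c := Pt / Ps.
have Rc : realign (gamma j) = c *: gamma j.
  apply/matrixP => p0 q0; rewrite [RHS]mxE.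
  have := key (fun p q => ((p == p0) && (q == q0))%:R); rewrite !entry_contr => E.
  apply: (mulIf Psnz); by rewrite E /c mulrAC divfK // mulrC.
have cge : 0 <= c.
  have -> : c = s j / t j.
    have tnz : t j != 0 by apply: lt0r_neq0; exact: tpos.
    by apply/eqP; rewrite /c eqr_div // Etr mulrC.
  by apply: divr_ge0 => //; apply: Order.POrderTheory.ltW.
have cc : c * c = 1.
  have : gamma j = (c * c) *: gamma j.
    by rewrite -{1}(realignK (gamma j)) Rc realignZ Rc scalerA.
  move/eqP; rewrite -subr_eq0 -{1}(scale1r (gamma j)) -scalerBl scaler_eq0 (negbTE (nz j)) orbF.
  by rewrite subr_eq0 eq_sym => /eqP.
have c1 : c = 1.
  have : (c - 1) * (c + 1) == 0 by rewrite -subr_sqr expr1n expr2 cc subrr.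
  rewrite mulf_eq0 subr_eq0 => /orP[/eqP //|].
  by rewrite Order.POrderTheory.gt_eqF // ltr_wpDl.
by rewrite Rc c1 scale1r.
Qed.

Unset Implicit Arguments.
Theorem mainTheorem16 (n : nat) (k : 'I_n -> nat)
    (gamma : forall i : 'I_n, 'M[algC]_(k i * k i)) :
  (forall i, psd (gamma i)) ->
  (forall i, ~ image_in_antisym (gamma i)) ->
  [/\ psd (ptrans (shuffle gamma)) <-> (forall i, psd (ptrans (gamma i))),
      psd (realign (ptrans (shuffle gamma))) <->
        (forall i, psd (realign (ptrans (gamma i))))
    & realign (shuffle gamma) = shuffle gamma <->
        (forall i, realign (gamma i) = gamma i)].
Proof.
move=> hpsd hna.
have nz : forall i, gamma i != 0.
  move=> i; apply/negP => /eqP e; apply: (hna i) => v.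
  by rewrite /antisym e mul0mx mulmx0 oppr0.
split.
- rewrite ptrans_shuffle; split; last exact: psd_shuffle.
  move=> h.
  have [w hw] : exists w : forall i, 'cV[algC]_(k i * k i),
      forall i, 0 < qf (ptrans (gamma i)) (w i).
    apply: (@fin_all_exists _ (fun i => 'cV[algC]_(k i * k i)) (fun i w => 0 < qf (ptrans (gamma i)) w)) => i.
    have [r hr] := psd_diagpos (hpsd i) (nz i).
    by exists (ecol r); rewrite qf_delta mxE kidxK.
  exact: (shuffle_psd_inv hw h).
- rewrite ptrans_shuffle realign_shuffle; split; last exact: psd_shuffle.
  move=> h.
  have hw : forall i, 0 < qf (realign (ptrans (gamma i))) (omega (k i)).
    by move=> i; rewrite qf_omega_rp; exact: tr_pos.
  exact: (shuffle_psd_inv hw h).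
- rewrite realign_shuffle; split; first exact: scal_arg.
  exact: eq_shuffle.
Qed.
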